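(* Let $V$ be a finite set of variables and let $(\mathit{base}_0, \mathit{stay}_0, \mathit{step}_0, \mathit{conc}_0)$ and $(\mathit{base}_1, \mathit{stay}_1, \mathit{step}_1, \mathit{conc}_1)$ be generalized acceleration lemmas (GALs) over $V$. Define $$\mathit{stayBase} := \bigwedge_{i \in \{0,1\}}\big((\mathit{base}_i \land \lnot \mathit{base}_{1 - i}) \to \mathit{base}_i[V \mapsto V']\big),$$ $$\mathit{step} := \mathit{stayBase} \land \bigvee_{i \in \{0, 1\}}(\mathit{step}_i \land \lnot\mathit{base}_i \land \mathit{stay}_{1 - i}).$$ Then the tuple $(\mathit{base}_0 \land \mathit{base}_1,\ \mathit{stay}_0 \land \mathit{stay}_1 \land \mathit{stayBase},\ \mathit{step},\ \mathit{conc}_0 \land \mathit{conc}_1)$ is also a GAL over $V$.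
   Context: Fix a first-order theory $T$. For a set of variables $X$, $\mathcal{A}(X)$ denotes the set of assignments $\nu: X \to \mathcal{V}$ (values). $X' = \{x' \mid x \in X\}$ is a disjoint primed copy of $X$; for $\nu \in \mathcal{A}(X)$, $\nu' \in \mathcal{A}(X')$ is given by $\nu'(x') = \nu(x)$; for $\nu_1,\nu_2 \in \mathcal{A}(X)$, $\langle \nu_1,\nu_2\rangle := \nu_1 \uplus \nu_2'$. $\nu \models_T \alpha$ denotes entailment in $T$. For a formula $\alpha$, $\alpha[V\mapsto V']$ is the result of replacing each $v\in V$ simultaneously by $v'$. A generalized acceleration lemma (GAL) over $V$ is a tuple $(\mathit{base}, \mathit{stay}, \mathit{step}, \mathit{conc})$ of first-order formulas with $\mathit{base}, \mathit{conc}$ having free variables in $V$ and $\mathit{stay}, \mathit{step}$ having free variables in $V \cup V'$, such that: (I) for every sequence $\alpha \in \mathcal{A}(V)^\omega$ with $\alpha[0] \models_T \mathit{conc}$, if (a) for all $i$, $\langle\alpha[i],\alpha[i+1]\rangle \models_T \mathit{step} \lor \mathit{stay}$, and (b) for all $i$ there is $j \ge i$ with $\langle\alpha[j],\alpha[j+1]\rangle \models_T \mathit{step}$, then there is $k$ with $\alpha[k] \models_T \mathit{base}$; and (II) for all $\nu,\nu' \in \mathcal{A}(V)$ with $\nu \models_T \mathit{conc}$ and $\langle \nu,\nu'\rangle \models_T \mathit{step}\lor\mathit{stay}$, we have $\nu' \models_T \mathit{conc}$. *)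

(* Defs.v *)
From mathcomp Require Import all_boot.
Set Implicit Arguments. Unset Strict Implicit. Unset Printing Implicit Defensive.

(* Semantic rendering of first-order formulas modulo the fixed theory T:
   a formula with free variables in X is identified with its satisfaction
   predicate on assignments nu : X -> Val (nu |=_T alpha).  *)
Definition assign (Val X : Type) := X -> Val.
Definition form (Val X : Type) := assign Val X -> Prop.

Definition sat {Val X : Type} (nu : assign Val X) (a : form Val X) : Prop := a nu.

Definition fAnd {Val X} (a b : form Val X) : form Val X := fun nu => a nu /\ b nu.
Definition fOr  {Val X} (a b : form Val X) : form Val X := fun nu => a nu \/ b nu.
Definition fNot {Val X} (a : form Val X) : form Val X := fun nu => ~ a nu.
Definition fImp {Val X} (a b : form Val X) : form Val X := fun nu => a nu -> b nu.

(* V u V' is represented as the disjoint sum V + V: inl x is x, inr x is x'. *)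
Definition pairA {Val V : Type} (nu1 nu2 : assign Val V) : assign Val (V + V) :=
  fun z => match z with inl x => nu1 x | inr x => nu2 x end.

Definition liftV {Val V : Type} (a : form Val V) : form Val (V + V) :=
  fun mu => a (fun x => mu (inl x)).

Definition primeV {Val V : Type} (a : form Val V) : form Val (V + V) :=
  fun mu => a (fun x => mu (inr x)).

Definition is_GAL {Val V : Type} (base : form Val V) (stay step : form Val (V + V))
    (conc : form Val V) : Prop :=
  (forall alpha : nat -> assign Val V,
      sat (alpha 0) conc ->
      (forall i, sat (pairA (alpha i) (alpha i.+1)) (fOr step stay)) ->
      (forall i, exists j, i <= j /\ sat (pairA (alpha j) (alpha j.+1)) step) ->
      exists k, sat (alpha k) base)
  /\
  (forall nu nu' : assign Val V,
      sat nu conc -> sat (pairA nu nu') (fOr step stay) -> sat nu' conc).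

(* Main.v *)
Require Import Defs.
From mathcomp Require Import all_boot.
From Stdlib Require Import Classical.
From mathcomp Require Import zify.

Lemma helperL (Val : Type) (V : Type) (b b' : form Val V) (st sp : form Val (V + V))
  (c : form Val V) (alpha : nat -> assign Val V) :
  is_GAL b st sp c -> c (alpha 0) ->
  (forall i, sp (pairA (alpha i) (alpha i.+1)) \/ st (pairA (alpha i) (alpha i.+1))) ->
  (forall i, exists j, i <= j /\ sp (pairA (alpha j) (alpha j.+1)) /\ ~ b (alpha j)) ->
  (forall n, b (alpha n) -> ~ b' (alpha n) -> b (alpha n.+1)) ->
  exists k, b (alpha k) /\ b' (alpha k).
Proof.
move=> [G1 _] c0 Htr Hinf Hsb.
have [k bk] : exists k, b (alpha k).
  apply: (G1 alpha c0) => //.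
  move=> i; have [j [ij [sj _]]] := Hinf i; by exists j.
have [j [kj [_ nbj]]] := Hinf k.
have key : forall d n, b (alpha n) -> ~ b (alpha (n + d)) ->
   exists m, b (alpha m) /\ b' (alpha m).
  elim=> [|d IH] n bn nb.
    by rewrite addn0 in nb.
  case: (classic (b' (alpha n))) => [h|h]; first by exists n.
  apply: (IH n.+1 (Hsb n bn h)).
  by rewrite addSnnS.
apply: (key (j - k) k bk).
by rewrite subnKC.
Qed.

Lemma conc_all (Val : Type) (V : Type) (b : form Val V) (st sp : form Val (V + V))
  (c : form Val V) (alpha : nat -> assign Val V) :
  is_GAL b st sp c -> c (alpha 0) ->
  (forall i, sp (pairA (alpha i) (alpha i.+1)) \/ st (pairA (alpha i) (alpha i.+1))) ->
  forall n, c (alpha n).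
Proof.
move=> [_ G2] c0 Htr; elim=> [|n IH] //.
exact: (G2 _ _ IH (Htr n)).
Qed.

Theorem lemma1 (Val : Type) (V : finType)
  (base0 : form Val V) (stay0 step0 : form Val (V + V)) (conc0 : form Val V)
  (base1 : form Val V) (stay1 step1 : form Val (V + V)) (conc1 : form Val V) :
  is_GAL base0 stay0 step0 conc0 ->
  is_GAL base1 stay1 step1 conc1 ->
  let stayBase : form Val (V + V) :=
    fAnd (fImp (fAnd (liftV base0) (fNot (liftV base1))) (primeV base0))
         (fImp (fAnd (liftV base1) (fNot (liftV base0))) (primeV base1)) in
  let step : form Val (V + V) :=
    fAnd stayBase
         (fOr (fAnd step0 (fAnd (fNot (liftV base0)) stay1))
              (fAnd step1 (fAnd (fNot (liftV base1)) stay0))) in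
  is_GAL (fAnd base0 base1) (fAnd stay0 (fAnd stay1 stayBase)) step (fAnd conc0 conc1).
Proof.
move=> G0 G1 stayBase step.
have tr0 : forall nu nu', sat (pairA nu nu') (fOr step (fAnd stay0 (fAnd stay1 stayBase))) ->
   step0 (pairA nu nu') \/ stay0 (pairA nu nu').
  move=> nu nu'; cbv beta delta [sat fOr step stayBase fAnd fImp fNot liftV primeV pairA]. tauto.
have tr1 : forall nu nu', sat (pairA nu nu') (fOr step (fAnd stay0 (fAnd stay1 stayBase))) ->
   step1 (pairA nu nu') \/ stay1 (pairA nu nu').
  move=> nu nu'; cbv beta delta [sat fOr step stayBase fAnd fImp fNot liftV primeV pairA]; tauto.
have sb : forall nu nu', sat (pairA nu nu') (fOr step (fAnd stay0 (fAnd stay1 stayBase))) ->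
   (base0 nu -> ~ base1 nu -> base0 nu') /\ (base1 nu -> ~ base0 nu -> base1 nu').
  move=> nu nu'; cbv beta delta [sat fOr step stayBase fAnd fImp fNot liftV primeV pairA].
  tauto.
split; last first.
  move=> nu nu' [c0 c1] H; split.
  - exact: (G0.2 _ _ c0 (tr0 _ _ H)).
  - exact: (G1.2 _ _ c1 (tr1 _ _ H)).
move=> alpha [c0 c1] Htr Hinf.
pose P := forall i, exists j, i <= j /\ step0 (pairA (alpha j) (alpha j.+1))
   /\ ~ base0 (alpha j).
case: (classic P) => HP.
  have [k [b0 b1]] := helperL _ _ base0 base1 _ _ _ _ G0 c0 (fun i => tr0 _ _ (Htr i)) HP
     (fun n => (sb _ _ (Htr n)).1).
  by exists k.
have [i0 Hi0] : exists i0, ~ exists j, i0 <= j /\ step0 (pairA (alpha j) (alpha j.+1))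
   /\ ~ base0 (alpha j).
  by apply: not_all_ex_not.
pose beta n := alpha (n + i0).
have cb : conc1 (beta 0) by rewrite /beta add0n; exact: (conc_all _ _ _ _ _ _ _ G1 c1 (fun i => tr1 _ _ (Htr i))).
have Htrb : forall i, step1 (pairA (beta i) (beta i.+1)) \/ stay1 (pairA (beta i) (beta i.+1)).
  by move=> i; rewrite /beta addSn; apply: tr1; apply: Htr.
have Hinfb : forall i, exists j, i <= j /\ step1 (pairA (beta j) (beta j.+1)) /\ ~ base1 (beta j).
  move=> i; have [j [ij sj]] := Hinf (i + i0).
  exists (j - i0); rewrite /beta addSn subnK; last by move: ij; clear; lia.
  split; first by move: ij; clear; lia.
  move: sj; rewrite /sat /step /stayBase /fAnd /fOr /fNot /liftV /= => [[_ [[s0 [nb0 _]]|[s1 [nb1 _]]]]].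
    exfalso; apply: Hi0; exists j; split; first by move: ij; clear; lia.
    split; [exact: s0 | exact: nb0].
  split; [exact: s1 | exact: nb1].
have [k [b1 b0]] := helperL _ _ base1 base0 _ _ _ _ G1 cb Htrb Hinfb
   (fun n => (sb _ _ (Htr (n + i0))).2).
by exists (k + i0); split.
Qed.
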